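(* Let $G$ be a connected graph containing a longest path $L=x_0x_1\ldots x_p$ with $p\ge 2$, and a path $P=y_0y_1\ldots y_s$ with $s\ge p-2$. Then $|V(L)\cap V(P)|\ge 1$, unless $p$ is even, $s=p-2$, and $x_{p/2}y_{s/2}$ is a cut-edge of $G$.
   Context: All graphs are finite, simple and undirected. The length of a path is its number of edges; a longest path is one of maximum length in $G$. A cut-edge is an edge whose removal disconnects the graph. *)

(* Defs.v *)
From mathcomp Require Import all_boot.
Set Implicit Arguments. Unset Strict Implicit. Unset Printing Implicit Defensive.

Section Graph.
Variable T : finType.

Definition simple_graph (e : rel T) : Prop := irreflexive e /\ symmetric e.

Definition connected_graph (e : rel T) : Prop := forall x y, connect e x y.

(* A path in G: nonempty sequence of pairwise distinct vertices with
   consecutive vertices adjacent. Its length is (size s).-1 (number of edges). *)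
Definition gpath (e : rel T) (s : seq T) : bool :=
  if s is x :: s' then path e x s' && uniq s else false.

Definition longest_path (e : rel T) (s : seq T) : Prop :=
  gpath e s /\ forall q, gpath e q -> size q <= size s.

Definition remove_edge (e : rel T) (x y : T) : rel T :=
  fun u v => e u v && ~~ (((u == x) && (v == y)) || ((u == y) && (v == x))).

Definition cut_edge (e : rel T) (x y : T) : Prop :=
  e x y /\ ~ connected_graph (remove_edge e x y).

End Graph.

(* Main.v *)
Require Import Defs.
From mathcomp Require Import all_boot.
From mathcomp Require Import zify.

Lemma walk_lemma (T : finType) (e : rel T) (A B : pred T) a b :
  connect e a b -> A a -> B b -> (forall v, A v -> B v -> False) ->
  exists x mid y, [/\ A x, B y, path e x (rcons mid y), uniq (x :: rcons mid y)
    & forall v, v \in mid -> ~~ A v /\ ~~ B v].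
Proof.
move=> /connectP [q pq ->] Aa Bb dis.
suff main : forall n x w, size w <= n -> A x -> B (last x w) -> path e x w ->
    uniq (x :: w) ->
  exists x mid y, [/\ A x, B y, path e x (rcons mid y), uniq (x :: rcons mid y)
    & forall v, v \in mid -> ~~ A v /\ ~~ B v].
  move: Bb; case: (shortenP pq) => w pw uw _ Bw.
  exact: (main (size w) a w).
elim => [|n IH] x w.
  by case: w => // _ Ax Bx; case: (dis x).
case/lastP: w => [|mid y] sw Ax Bw pw uw.
  by case: (dis x).
rewrite last_rcons in Bw.
case: (boolP (all (fun v => ~~ A v && ~~ B v) mid)) => [allok | /allPn [v vmid bad]].
  exists x, mid, y; split => // v vm.
  by move/allP: allok => /(_ v vm) /andP.
move: pw uw sw; case/splitPr: vmid => m1 m2.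
rewrite rcons_cat rcons_cons => pw uw sw.
move: bad; rewrite negb_and !negbK => /orP[Hv | Hv].
- apply: (IH v (rcons m2 y)) => //.
  + move: sw; rewrite size_cat /=; lia.
  + by rewrite last_rcons.
  + by move: pw; rewrite cat_path => /andP[_ /= /andP[_ ->]].
  + by move: uw; rewrite -cat_cons cat_uniq => /and3P[_ _ ->].
- apply: (IH x (rcons m1 v)) => //.
  + move: sw; rewrite size_cat /= !size_rcons; lia.
  + by rewrite last_rcons.
  + by move: pw; rewrite cat_path rcons_path => /andP[-> /= /andP[-> _]].
  + move: uw.
    have -> : x :: m1 ++ v :: rcons m2 y = (x :: rcons m1 v) ++ rcons m2 y.
      by rewrite /= cat_rcons.
    by rewrite cat_uniq => /andP[-> _].
Qed.

Lemma gpath_suffix (T : finType) (e : rel T) U W :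
  gpath e (U ++ W) -> W != [::] -> gpath e W.
Proof.
case: W => // w W + _; case: U => [//|u U].
rewrite /gpath /= cat_path => /andP[/andP[_ /= /andP[_ ->]] uw] /=.
by move: uw => /andP[_]; rewrite cat_uniq => /and3P[_ _].
Qed.

Lemma gpath_prefix (T : finType) (e : rel T) U W :
  gpath e (U ++ W) -> U != [::] -> gpath e U.
Proof.
case: U => // u U + _; rewrite /gpath /= cat_path => /andP[/andP[-> _]].
by rewrite mem_cat negb_or cat_uniq => /andP[/andP[-> _] /andP[-> _]].
Qed.

Lemma gpath_rev (T : finType) (e : rel T) s :
  symmetric e -> gpath e s -> gpath e (rev s).
Proof.
case: s => // a s sym; rewrite /gpath => /andP[pa ua].
rewrite lastI rev_rcons -rev_rcons -lastI rev_uniq ua andbT rev_path.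
by apply: sub_path pa => u v; rewrite sym.
Qed.

Lemma gpath_cat_path (T : finType) (e : rel T) x0 U W :
  gpath e U -> path e (last x0 U) W -> uniq (U ++ W) -> gpath e (U ++ W).
Proof.
by case: U => // u U; rewrite /gpath /= cat_path => /andP[-> _] -> ->.
Qed.

Lemma combine (T : finType) (e : rel T) L P x mid y U0 V0 :
  symmetric e -> longest_path e L -> gpath e P ->
  (forall v, v \in L -> v \in P -> False) ->
  path e x (rcons mid y) -> uniq (x :: rcons mid y) ->
  (forall v, v \in mid -> v \notin L /\ v \notin P) ->
  gpath e (x :: U0) -> gpath e (y :: V0) ->
  {subset x :: U0 <= L} -> {subset y :: V0 <= P} ->
  size U0 + size mid + size V0 + 2 <= size L.
Proof.
move=> sym [gL lL] gP dis pxy uxy avoid gU gV subL subP.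
have gW : gpath e (rev (x :: U0) ++ (rcons mid y ++ V0)).
  apply: (@gpath_cat_path _ _ x).
  - exact: gpath_rev.
  - rewrite rev_cons last_rcons cat_path pxy last_rcons /=.
    by move: gV => /andP[].
  - rewrite cat_uniq rev_uniq; apply/and3P; split.
    + by move: gU => /andP[].
    + apply/hasPn => v; rewrite mem_cat mem_rcons in_cons mem_rev.
      case/orP => [/orP[/eqP -> | vm] | vV].
      * by apply/negP => /subL yL; apply: (dis y) => //; apply: subP; rewrite mem_head.
      * by apply/negP => /subL vL; case: (avoid v vm); rewrite vL.
      * apply/negP => /subL vL; apply: (dis v) => //; apply: subP.
        by rewrite in_cons vV orbT.
    + rewrite cat_uniq; apply/and3P; split.
      * by move: uxy => /andP[].
      * apply/hasPn => v vV; rewrite mem_rcons in_cons negb_or; apply/andP; split.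
          apply/eqP => vy; move: gV => /andP[_] /andP[/negP + _].
          by rewrite -vy.
        apply/negP => vm; case: (avoid v vm) => _ /negP; apply; apply: subP.
        by rewrite in_cons vV orbT.
      * by move: gV => /andP[_] /andP[_].
have := lL _ gW.
by rewrite !size_cat size_rev size_rcons /=; lia.
Qed.

Lemma arith p s i j m : p - 2 <= s ->
  p.+1 - i.+1 + m + (s.+1 - j.+1) + 2 <= p.+1 ->
  p.+1 - i.+1 + m + j + 2 <= p.+1 ->
  i + m + (s.+1 - j.+1) + 2 <= p.+1 ->
  i + m + j + 2 <= p.+1 ->
  [/\ m = 0, i.*2 = p, s = p - 2 & j.*2 = s].
Proof. move=> *; split; lia. Qed.

Lemma key (T : finType) (e : rel T) L P p s x mid y :
  symmetric e -> longest_path e L -> size L = p.+1 ->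
  gpath e P -> size P = s.+1 -> p - 2 <= s ->
  (forall v, v \in L -> v \in P -> False) -> x \in L -> y \in P ->
  path e x (rcons mid y) -> uniq (x :: rcons mid y) ->
  (forall v, v \in mid -> v \notin L /\ v \notin P) ->
  [/\ mid = [::], (index x L).*2 = p, s = p - 2 & (index y P).*2 = s].
Proof.
move=> sym lL sL gP sP ps dis xL yP pxy uxy avoid.
have gL := lL.1.
set i := index x L; set j := index y P.
have iL : i < size L by rewrite index_mem.
have jP : j < size P by rewrite index_mem.
have dL : drop i L = x :: drop i.+1 L by rewrite (drop_nth x) ?nth_index.
have tL : rev (take i.+1 L) = x :: rev (take i L) by rewrite (take_nth x) // nth_index // rev_rcons.
have dP : drop j P = y :: drop j.+1 P by rewrite (drop_nth y) ?nth_index.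
have tP : rev (take j.+1 P) = y :: rev (take j P) by rewrite (take_nth y) // nth_index // rev_rcons.
have gdL : gpath e (x :: drop i.+1 L).
  by rewrite -dL; apply: (@gpath_suffix _ _ (take i L)); rewrite ?cat_take_drop ?dL.
have gtL : gpath e (x :: rev (take i L)).
  rewrite -tL; apply: gpath_rev => //; apply: (@gpath_prefix _ _ _ (drop i.+1 L)).
    by rewrite cat_take_drop.
  by rewrite (take_nth x) // -cats1; case: (take i L).
have gdP : gpath e (y :: drop j.+1 P).
  by rewrite -dP; apply: (@gpath_suffix _ _ (take j P)); rewrite ?cat_take_drop ?dP.
have gtP : gpath e (y :: rev (take j P)).
  rewrite -tP; apply: gpath_rev => //; apply: (@gpath_prefix _ _ _ (drop j.+1 P)).
    by rewrite cat_take_drop.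
  by rewrite (take_nth y) // -cats1; case: (take j P).
have sdL : {subset x :: drop i.+1 L <= L} by rewrite -dL => v /mem_drop.
have stL : {subset x :: rev (take i L) <= L} by rewrite -tL => v; rewrite mem_rev => /mem_take.
have sdP : {subset y :: drop j.+1 P <= P} by rewrite -dP => v /mem_drop.
have stP : {subset y :: rev (take j P) <= P} by rewrite -tP => v; rewrite mem_rev => /mem_take.
have c1 := @combine _ _ _ _ _ _ _ _ _ sym lL gP dis pxy uxy avoid gdL gdP sdL sdP.
have c2 := @combine _ _ _ _ _ _ _ _ _ sym lL gP dis pxy uxy avoid gdL gtP sdL stP.
have c3 := @combine _ _ _ _ _ _ _ _ _ sym lL gP dis pxy uxy avoid gtL gdP stL sdP.
have c4 := @combine _ _ _ _ _ _ _ _ _ sym lL gP dis pxy uxy avoid gtL gtP stL stP.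
move: c1 c2 c3 c4; rewrite !size_rev !size_drop !size_takel; try lia.
rewrite sL sP => c1 c2 c3 c4.
have [m0 -> -> ->] := arith _ _ _ _ _ ps c1 c2 c3 c4.
by split => //; apply: size0nil.
Qed.

Theorem lemma2 (T : finType) (e : rel T) (L P : seq T) (p s : nat) :
  simple_graph e -> connected_graph e ->
  longest_path e L -> size L = p.+1 -> 2 <= p ->
  gpath e P -> size P = s.+1 -> p - 2 <= s ->
  (exists v, v \in L /\ v \in P) \/
  [/\ ~~ odd p, s = p - 2 &
      exists x y, [/\ onth L (p %/ 2) = Some x, onth P (s %/ 2) = Some y
                    & cut_edge e x y]].
Proof.
move=> [irr sym] conn lL sL p2 gP sP ps.
have [v /andP[vL vP]|nohas] := pickP (fun v => (v \in L) && (v \in P)).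
  by left; exists v.
right.
have dis : forall v, v \in L -> v \in P -> False.
  by move=> v vL vP; have := nohas v; rewrite vL vP.
have [l0 l0L] : exists l0, l0 \in L by case: L sL {lL nohas dis} => [//|a l] _; exists a; rewrite mem_head.
have [q0 q0P] : exists q0, q0 \in P by case: P sP {gP nohas dis} => [//|a l] _; exists a; rewrite mem_head.
have [x [mid [y [xL yP pxy uxy avoid]]]] :=
  @walk_lemma _ _ (fun v => v \in L) (fun v => v \in P) _ _ (conn l0 q0) l0L q0P dis.
have avoid' : forall v, v \in mid -> v \notin L /\ v \notin P by [].
have [m0 ix sp jy] := @key _ _ _ _ _ _ _ _ _ sym lL sL gP sP ps dis xL yP pxy uxy avoid'.
subst mid.
split => //; first by rewrite -ix odd_double.
exists x, y; split.
- have -> : p %/ 2 = index x L by rewrite -ix; lia.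
  by rewrite onthE (nth_map x) ?index_mem // nth_index.
- have -> : s %/ 2 = index y P by rewrite -jy; lia.
  by rewrite onthE (nth_map y) ?index_mem // nth_index.
split; first by move: pxy => /= /andP[].
move=> conn'.
have [x' [mid' [y' [x'L y'P pxy' uxy' avoid2]]]] :=
  @walk_lemma _ _ (fun v => v \in L) (fun v => v \in P) _ _ (conn' l0 q0) l0L q0P dis.
have pxy'e : path e x' (rcons mid' y').
  by apply: sub_path pxy' => u w /andP[].
have avoid2' : forall v, v \in mid' -> v \notin L /\ v \notin P by [].
have [m0' ix' _ jy'] := @key _ _ _ _ _ _ _ _ _ sym lL sL gP sP ps dis x'L y'P pxy'e uxy' avoid2'.
subst mid'.
have ex : x' = x.
  have : index x' L = index x L by lia.
  by move=> eq; rewrite -(nth_index x x'L) eq nth_index.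
have ey : y' = y.
  have : index y' P = index y P by lia.
  by move=> eq; rewrite -(nth_index y y'P) eq nth_index.
subst x' y'.
by move: pxy' => /=; rewrite /remove_edge !eqxx /= andbF.
Qed.
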